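(* Let $n\ge 1$. For a canonical decorated permutation $(\pi,(a_1,\ldots,a_n))$ of $[n]$ with run decomposition $(B_0,B_1,B_2,\ldots)=(D^{(0)}_\pi,A^{(1)}_\pi,D^{(1)}_\pi,A^{(2)}_\pi,\ldots)$ (so $B_0=\{0\}$ and $B_k$ is the $k$-th block), define a tree $\tau$ on the vertex set $\{0,1,\ldots,n\}$, rooted at $0$, as follows: for $k\ge1$, each letter $\ell\in B_k$ with decoration $a_\ell=d$ is made a child of the $d$-th smallest element of $B_{k-1}$ if $k$ is odd, and of the $d$-th largest element of $B_{k-1}$ if $k$ is even, counting from $0$ (the smallest, resp. largest, element being the $0$-th). Then $\tau$ is an intransitive tree whose set of vertices at depth $k$ is $B_k$ for every $k$, and the map $(\pi,(a_i))\mapsto\tau$ is a bijection from the set of canonical decorated permutations of $[n]$ onto the set of intransitive trees on the vertex set $\{0,1,\ldots,n\}$.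
   Context: Permutations: for a permutation $\pi=\pi_1\cdots\pi_n$ of $[n]$, $\pi_i$ is an ascent top if $i=1$ or $\pi_{i-1}<\pi_i$, and a descent bottom if $\pi_{i-1}>\pi_i$. The run decomposition $\mathsf{RunDec}(\pi)=(D^{(0)}_\pi,A^{(1)}_\pi,D^{(1)}_\pi,A^{(2)}_\pi,\ldots)$ consists of $D^{(0)}_\pi=\{0\}$ followed by the letter sets of the maximal factors of $\pi$ consisting alternately of ascent tops ($A$-blocks) and descent bottoms ($D$-blocks); the first factor consists of ascent tops. A (stable) decorated permutation is a pair $(\pi,(a_1,\ldots,a_n))$ ($a_i$ attached to the letter $i$) with $0\le a_i<|\{j\in A^{(k)}_\pi: j>i,\ k\le\ell\}|$ if $i\in D^{(\ell)}_\pi$ and $0\le a_i<|\{j\in D^{(k)}_\pi: j<i,\ k<\ell\}|$ if $i\in A^{(\ell)}_\pi$. It is canonical if moreover $a_i<\mu_i(\pi)$ for all $i$, where $\mu_i(\pi)=|\{j\in A^{(\ell)}_\pi: j>i\}|$ if $i\in D^{(\ell)}_\pi$ and $\mu_i(\pi)=|\{j\in D^{(\ell-1)}_\pi: j<i\}|$ if $i\in A^{(\ell)}_\pi$. An intransitive tree (Postnikov) is a tree with distinct integer labels on its vertices such that every vertex's label is either smaller than the labels of all its neighbours or greater than the labels of all its neighbours. The depth of a vertex is its distance from the root $0$. *)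

(* Defs.v *)
From mathcomp Require Import all_boot.
Set Implicit Arguments. Unset Strict Implicit. Unset Printing Implicit Defensive.

(* Permutations of [n] are words s = pi_1 ... pi_n : seq nat with     *)
(* perm_eq s (iota 1 n).  Positions are 0-based: pi_{i+1} = nth 0 s i. *)

Definition asc_top (s : seq nat) (i : nat) : bool :=
  (i == 0) || (nth 0 s i.-1 < nth 0 s i).
Definition desc_bot (s : seq nat) (i : nat) : bool :=
  (0 < i) && (nth 0 s i < nth 0 s i.-1).

(* Index (>= 1) of the maximal factor of alternating type (ascent tops /
   descent bottoms) containing position i: one plus the number of type
   changes among positions 1..i.  Factor 1 is the first factor (ascent tops). *)
Definition blk (s : seq nat) (i : nat) : nat :=
  1 + count (fun j => asc_top s j != asc_top s j.-1) (iota 1 i).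

Definition RunBlock (s : seq nat) (k : nat) : seq nat :=
  if k == 0 then [:: 0]
  else [seq nth 0 s i | i <- iota 0 (size s) & blk s i == k].

Definition AscBlock (s : seq nat) (m : nat) : seq nat := RunBlock s (2 * m).-1.
Definition DescBlock (s : seq nat) (m : nat) : seq nat := RunBlock s (2 * m).

Definition level (s : seq nat) (x : nat) : nat := blk s (index x s).

Definition deco (n : nat) (a : n.-tuple nat) (x : nat) : nat := nth 0 a x.-1.

(* bound in the definition of a stable decorated permutation:
   x in D^{(l)} : |{ j in A^{(k)}, j > x, 1 <= k <= l }|
   x in A^{(l)} : |{ j in D^{(k)}, j < x, 0 <= k < l }| *)
Definition stable_bound (s : seq nat) (x : nat) : nat :=
  let k := level s x in
  if odd k then
    let l := k.+1./2 in
    count (fun j => j < x) (flatten [seq DescBlock s k' | k' <- iota 0 l])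
  else
    let l := k./2 in
    count (fun j => x < j) (flatten [seq AscBlock s k' | k' <- iota 1 l]).

Definition mu (s : seq nat) (x : nat) : nat :=
  let k := level s x in
  if odd k then
    let l := k.+1./2 in count (fun j => j < x) (DescBlock s l.-1)
  else
    let l := k./2 in count (fun j => x < j) (AscBlock s l).

Definition is_perm_of (n : nat) (s : seq nat) : bool := perm_eq s (iota 1 n).

Definition stable_decperm (n : nat) (s : seq nat) (a : n.-tuple nat) : bool :=
  is_perm_of n s && all (fun x => deco a x < stable_bound s x) s.

Definition canonical_decperm (n : nat) (s : seq nat) (a : n.-tuple nat) : bool :=
  stable_decperm s a && all (fun x => deco a x < mu s x) s.

(* Graphs on the vertex set {0, ..., n} = 'I_n.+1, given by their set  *)
(* of (ordered, symmetric) adjacent pairs.                             *)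
Definition graph (n : nat) := {set 'I_n.+1 * 'I_n.+1}.

Definition adj (n : nat) (G : graph n) : rel 'I_n.+1 := fun u v => (u, v) \in G.

Definition is_tree (n : nat) (G : graph n) : Prop :=
  [/\ forall u v, (u, v) \in G -> (v, u) \in G,
      forall u, (u, u) \notin G,
      forall u v, connect (adj G) u v &
      forall c : seq 'I_n.+1, uniq c -> 3 <= size c -> ~~ cycle (adj G) c].

Definition intransitive (n : nat) (G : graph n) : Prop :=
  forall v : 'I_n.+1,
    (forall w : 'I_n.+1, (v, w) \in G -> v < w) \/
    (forall w : 'I_n.+1, (v, w) \in G -> w < v).

Definition intransitive_tree (n : nat) (G : graph n) : Prop :=
  is_tree G /\ intransitive G.

Definition is_depth (n : nat) (G : graph n) (v : 'I_n.+1) (k : nat) : Prop :=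
  (exists p : seq 'I_n.+1, [/\ path (adj G) ord0 p, last ord0 p = v & size p = k]) /\
  (forall p : seq 'I_n.+1, path (adj G) ord0 p -> last ord0 p = v -> k <= size p).

Definition parent (n : nat) (s : seq nat) (a : n.-tuple nat) (x : nat) : nat :=
  let k := level s x in
  if odd k then nth 0 (sort leq (RunBlock s k.-1)) (deco a x)
  else nth 0 (sort geq (RunBlock s k.-1)) (deco a x).

Definition tau (n : nat) (s : seq nat) (a : n.-tuple nat) : graph n :=
  [set e : 'I_n.+1 * 'I_n.+1 |
     ((e.1 != 0 :> nat) && (parent s a e.1 == e.2)) ||
     ((e.2 != 0 :> nat) && (parent s a e.2 == e.1))].

(* Main.v *)
Require Import Defs.
From mathcomp Require Import all_boot.
From mathcomp Require Import zify.
Set Implicit Arguments. Unset Strict Implicit. Unset Printing Implicit Defensive.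

Lemma blkS s i : blk s i.+1 = blk s i + (asc_top s i.+1 != asc_top s i).
Proof. by rewrite /blk -[i.+1]addn1 iotaD count_cat /= addn0 add0n add1n addn1 addSn. Qed.

Lemma asc_blk s i : asc_top s i = odd (blk s i).
Proof.
elim: i => [//|i IH]; rewrite blkS oddD -IH.
by case: (asc_top s i.+1); case: (asc_top s i).
Qed.

Lemma blk_gt0 s i : 0 < blk s i. Proof. by []. Qed.

Lemma level_gt0 s x : 0 < level s x. Proof. by []. Qed.

Lemma level_nth s i : uniq s -> i < size s -> level s (nth 0 s i) = blk s i.
Proof. by move=> u hi; rewrite /level index_uniq. Qed.

Lemma RB_eq s k : uniq s -> k != 0 -> RunBlock s k = [seq x <- s | level s x == k].
Proof.
move=> u hk; rewrite /RunBlock (negbTE hk).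
transitivity [seq x <- mkseq (nth 0 s) (size s) | level s x == k]; last by rewrite mkseq_nth.
rewrite /mkseq filter_map; congr map.
apply: eq_in_filter => i; rewrite mem_iota => /andP[_ hi] /=.
by rewrite level_nth.
Qed.

Lemma RB0 s : RunBlock s 0 = [:: 0]. Proof. by []. Qed.

Definition ltf (f : nat -> nat) (x y : nat) : bool :=
  (f x < f y) || (f x == f y) && (if odd (f x) then x < y else y < x).

Lemma ltf_trans f : transitive (ltf f).
Proof.
move=> y x z; rewrite /ltf.
move=> /orP[h1|/andP[/eqP e1 h1]] /orP[h2|/andP[/eqP e2 h2]]; apply/orP.
- by left; apply: ltn_trans h2.
- by left; rewrite -e2.
- by left; rewrite e1.
- right; rewrite e1 e2 eqxx /=; rewrite e1 in h1; rewrite -e2.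
  by case: (odd (f y)) h1 h2 => h1 h2; lia.
Qed.

Lemma ltf_irr f : irreflexive (ltf f).
Proof. by move=> x; rewrite /ltf ltnn eqxx /=; case: odd; rewrite ltnn. Qed.

Lemma ltf_le f x y : ltf f x y -> f x <= f y.
Proof. by rewrite /ltf => /orP[/ltnW //|/andP[/eqP -> _]]. Qed.

Lemma sorted_ltf s f : uniq s -> (forall x, x \in s -> f x = level s x) ->
  sorted (ltf f) s.
Proof.
move=> u hf; apply/(sortedP 0) => i hi.
have hi' : i < size s by apply: ltnW.
rewrite /ltf !hf ?mem_nth // !level_nth // blkS.
case E: (asc_top s i.+1 != asc_top s i).
  by rewrite addn1 ltnSn.
rewrite addn0 ltnn eqxx orFb andTb.
move/negbFE/eqP: E; rewrite -asc_blk => <-.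
rewrite /asc_top /=.
case: ifP => // /negbT; rewrite -leqNgt => hle.
have : nth 0 s i != nth 0 s i.+1 by rewrite nth_uniq //; lia.
by rewrite neq_ltn => /orP[h|//]; move: (leq_trans h hle); rewrite ltnn.
Qed.
Lemma exists_max (T : eqType) (f : T -> nat) (c : seq T) x0 :
  x0 \in c -> exists2 v, v \in c & forall x, x \in c -> f x <= f v.
Proof.
elim: c x0 => [//|y c IH] x0 _.
case: c IH => [|z c] IH.
  by exists y => [|x]; rewrite ?mem_seq1 ?inE // => /eqP ->.
have [w wc hw] := IH z (mem_head _ _).
case: (leqP (f y) (f w)) => h.
  exists w; first by rewrite inE wc orbT.
  by move=> x; rewrite inE => /orP[/eqP ->|/hw].
exists y; first exact: mem_head.
move=> x; rewrite inE => /orP[/eqP -> //|/hw hx].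
by apply: leq_trans hx (ltnW h).
Qed.

Section HeightTree.
Variable n : nat.
Variable G : graph n.
Variable H : 'I_n.+1 -> nat.
Variable P : 'I_n.+1 -> 'I_n.+1.
Hypothesis HG : forall u v, (u, v) \in G <->
  (u != ord0 /\ P u = v) \/ (v != ord0 /\ P v = u).
Hypothesis H0 : H ord0 = 0.
Hypothesis Hpos : forall v, v != ord0 -> 0 < H v.
Hypothesis HP : forall v, v != ord0 -> H (P v) = (H v).-1.
Hypothesis Hdir : forall v, v != ord0 ->
  if odd (H v) then P v < v else v < P v.

Lemma HPS v : v != ord0 -> H v = (H (P v)).+1.
Proof. by move=> hv; rewrite HP // prednK // Hpos. Qed.

Lemma adjE u v : adj G u v ->
  (u != ord0 /\ P u = v /\ H u = (H v).+1) \/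
  (v != ord0 /\ P v = u /\ H v = (H u).+1).
Proof.
move/HG => [[hu hp]|[hv hp]].
  by left; rewrite -hp HPS.
by right; rewrite -hp HPS.
Qed.

Lemma adj_sym : symmetric (adj G).
Proof.
move=> u v; apply/idP/idP => /HG h; apply/HG; tauto.
Qed.

Lemma adjP v : v != ord0 -> adj G (P v) v.
Proof. by move=> hv; apply/HG; right. Qed.

Lemma Hv0 v : H v = 0 -> v = ord0.
Proof. by move=> h; apply/eqP; apply: contraT => /Hpos; rewrite h. Qed.

Lemma connect0v v : connect (adj G) ord0 v.
Proof.
have : forall m v, H v = m -> connect (adj G) ord0 v.
  elim=> [v0 /Hv0 ->|m IH v0 hm]; first exact: connect0.
  have hv : v0 != ord0 by apply/eqP => e; rewrite e H0 in hm.
  apply: connect_trans (IH (P v0) _) (connect1 (adjP hv)).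
  by rewrite HP // hm.
by move=> /(_ (H v) v erefl).
Qed.

Lemma tree_is_tree : is_tree G.
Proof.
split.
- by move=> u v h; rewrite -[_ \in _]/(adj G v u) adj_sym.
- move=> u; apply/negP => /HG [[hu hp]|[hu hp]];
    by move: (HPS hu); rewrite hp; lia.
- move=> u v; apply: connect_trans (connect0v v).
  by rewrite (sym_connect_sym adj_sym) connect0v.
- move=> c uc sc; apply/negP => cyc.
  have c0 : head ord0 c \in c by case: c sc {uc cyc} => //= x c _; exact: mem_head.
  have [v vc hv] := exists_max H c0.
  move: (rot_index vc) => hr.
  have uc' : uniq (rot (index v c) c) by rewrite rot_uniq.
  have cyc' : cycle (adj G) (rot (index v c) c) by rewrite rot_cycle.
  have sc' : 3 <= size (rot (index v c) c) by rewrite size_rot.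
  have hv' : forall x, x \in rot (index v c) c -> H x <= H v
    by move=> x; rewrite mem_rot; apply: hv.
  move: uc' cyc' sc' hv'; rewrite hr.
  set c1 := drop _ _ ++ _.
  case: c1 => [//|y c2]; case/lastP: c2 => [//|c3 z].
  move=> uc' cyc' _ hv'.
  rewrite /= rcons_path last_rcons in cyc'.
  case/and3P: cyc' => avy _ azv.
  have ey : P v = y.
    case: (adjE avy) => [[_ [-> //]]|[_ [_ hy]]].
    by move: (hv' y); rewrite !inE eqxx orbT hy ltnn => /(_ isT).
  have ez : P v = z.
    case: (adjE azv) => [[_ [_ hz]]|[_ [-> //]]].
    by move: (hv' z); rewrite !inE mem_rcons mem_head !orbT hz ltnn => /(_ isT).
  move: uc'; rewrite /= -ey ez mem_rcons mem_head.
  by rewrite andbF.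
Qed.

Lemma tree_intransitive : intransitive G.
Proof.
move=> v; case O: (odd (H v)); [right|left] => w /adjE.
- case=> [[hv [<- _]]|[hw [hp hh]]].
    by move: (Hdir hv); rewrite O.
  by move: (Hdir hw); rewrite hh /= O /= hp.
- case=> [[hv [<- _]]|[hw [hp hh]]].
    by move: (Hdir hv); rewrite O.
  by move: (Hdir hw); rewrite hh /= O /= hp.
Qed.

Lemma walk_bound p x : path (adj G) x p -> H (last x p) <= H x + size p.
Proof.
elim: p x => [|y p IH] x /=; first by rewrite addn0.
case/andP => axy /IH h.
have : H y <= (H x).+1 by case: (adjE axy) => [[_ [_ ->]]|[_ [_ ->]]]; lia.
lia.
Qed.

Lemma path_exists v : exists p, [/\ path (adj G) ord0 p, last ord0 p = v & size p = H v].
Proof.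
have : forall m v, H v = m ->
    exists p, [/\ path (adj G) ord0 p, last ord0 p = v & size p = H v].
  elim=> [v0 /Hv0 ->|m IH v0 hm]; first by exists [::]; rewrite H0.
  have hv : v0 != ord0 by apply/eqP => e; rewrite e H0 in hm.
  have [p [p1 p2 p3]] := IH (P v0) (etrans (HP hv) (congr1 predn hm)).
  exists (rcons p v0); rewrite rcons_path last_rcons size_rcons p1 p2 adjP //.
  by rewrite p3 -HPS.
by move=> /(_ (H v) v erefl).
Qed.

Lemma depthE v k : is_depth G v k <-> H v = k.
Proof.
split.
- case=> [[p [p1 p2 p3]] hmin].
  have := walk_bound p1; rewrite p2 H0 p3 add0n => h1.
  have [q [q1 q2 q3]] := path_exists v.
  have := hmin q q1 q2; rewrite q3 => h2.
  by apply/eqP; rewrite eqn_leq h1 h2.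
- move=> <-; split; first exact: path_exists.
  by move=> p p1 p2; have := walk_bound p1; rewrite p2 H0.
Qed.

End HeightTree.

Lemma odd_idx k : odd k -> 2 * (k.+1./2).-1 = k.-1.
Proof. move=> O; move: (odd_double_half k) (odd_double_half k.+1); rewrite /= O /=. lia. Qed.
Lemma even_idx k : ~~ odd k -> (2 * k./2).-1 = k.-1.
Proof. move=> O; move: (odd_double_half k); rewrite (negbTE O). lia. Qed.

Lemma nth_sorted_count (r : rel nat) (Q : pred nat) t d :
  transitive r -> sorted r t -> (forall y z, r y z -> Q z -> Q y) ->
  d < count Q t -> Q (nth 0 t d) && (nth 0 t d \in t).
Proof.
move=> tr; elim: t d => [//|y t IH] d /= st hQ.
case: d => [|d] /= hc.
  rewrite mem_head andbT.
  case Qy: (Q y) => //; rewrite Qy add0n in hc.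
  have /hasP[z zt Qz] : has Q t by rewrite has_count.
  suff : Q y by rewrite Qy.
  by apply: hQ Qz; move/allP: (order_path_min tr st); apply.
have hc' : d < count Q t by move: hc; case: (Q y) => /=; lia.
have /andP[h1 h2] := IH d (path_sorted st) hQ hc'.
by rewrite h1 inE h2 orbT.
Qed.

Lemma index_sorted_count (r : rel nat) (Q : pred nat) t p :
  transitive r -> sorted r t -> (forall y, r y p -> Q y) -> Q p -> p \in t ->
  index p t < count Q t.
Proof.
move=> tr; elim: t => [//|y t IH] /= st hQ Qp.
rewrite inE; case: (eqVneq p y) => [<- _|ne /= pt].
  by rewrite Qp.

have ry : r y p by move/allP: (order_path_min tr st); apply.
by rewrite hQ // add1n ltnS IH // (path_sorted st).
Qed.

Lemma geq_trans : transitive geq.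
Proof. by move=> y x z h1 h2; apply: leq_trans h2 h1. Qed.

Lemma geq_tot : total geq.
Proof. by move=> x y; rewrite /= orbC leq_total. Qed.

Definition hs (s : seq nat) (v : nat) : nat := if v == 0 then 0 else level s v.

Section Canon.
Variable n : nat.
Variable s : seq nat.
Hypothesis hperm : is_perm_of n s.

Lemma s_uniq : uniq s.
Proof. by rewrite (perm_uniq hperm) iota_uniq. Qed.

Lemma mem_s x : (x \in s) = (0 < x <= n).
Proof. by rewrite (perm_mem hperm) mem_iota add1n ltnS. Qed.

Lemma size_s : size s = n.
Proof. by rewrite (perm_size hperm) size_iota. Qed.

Lemma mem_RB v k : v \in RunBlock s k = if k == 0 then v == 0 else (v \in s) && (level s v == k).
Proof.
case: (eqVneq k 0) => [->|hk]; first by rewrite RB0 inE.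
by rewrite RB_eq ?s_uniq // mem_filter andbC.
Qed.

Lemma RB_uniq k : uniq (RunBlock s k).
Proof.
case: (eqVneq k 0) => [->//|hk].
by rewrite RB_eq ?s_uniq // filter_uniq // s_uniq.
Qed.

Lemma hs_RB v k : v <= n -> (hs s v == k) = (v \in RunBlock s k).
Proof.
move=> vn; rewrite mem_RB /hs.
case: (eqVneq v 0) => [->|v0].
  by case: k => [//|k]; rewrite mem_s.
have vs : v \in s by rewrite mem_s vn lt0n v0.
case: (eqVneq k 0) => [->|hk]; last by rewrite vs.
by rewrite /= eqn0Ngt level_gt0.
Qed.

Variable a : n.-tuple nat.
Hypothesis hcan : canonical_decperm s a.

Lemma deco_lt_mu x : x \in s -> deco a x < mu s x.
Proof. by move=> xs; case/andP: hcan => _ /allP; apply. Qed.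

Lemma parent_prop x : x \in s ->
  (parent s a x \in RunBlock s (level s x).-1) &&
  (if odd (level s x) then parent s a x < x else x < parent s a x).
Proof.
move=> xs; have := deco_lt_mu xs; rewrite /mu /parent; cbv zeta.
case O: (odd (level s x)).
- rewrite /DescBlock odd_idx // -(count_sort leq) => hc.
  have := nth_sorted_count leq_trans (sort_sorted leq_total _) _ hc.
  rewrite mem_sort andbC; apply=> y z /= h1 h2; exact: leq_ltn_trans h1 h2.
- rewrite /AscBlock even_idx ?O // -(count_sort geq) => hc.
  have := nth_sorted_count geq_trans (sort_sorted geq_tot _) _ hc.
  rewrite mem_sort andbC; apply=> y z /= h1 h2; exact: leq_trans h2 h1.
Qed.

Lemma parent_le x : x \in s -> parent s a x <= n.
Proof.
move=> /parent_prop /andP[]; rewrite mem_RB.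
case: eqP => _; first by move/eqP ->.
by case/andP; rewrite mem_s => /andP[].
Qed.

Lemma hs_parent x : x \in s -> hs s (parent s a x) = (level s x).-1.
Proof.
move=> /parent_prop /andP[]; rewrite mem_RB /hs.
case: eqP => [->|_]; first by move/eqP ->.
case/andP => ps /eqP <-.
by case: eqP => // e; move: ps; rewrite e mem_s.
Qed.


Lemma ord_mem (v : 'I_n.+1) : v != ord0 -> (v : nat) \in s.
Proof.
move=> hv; have := ltn_ord v; rewrite ltnS mem_s => ->; rewrite andbT lt0n.
by apply: contra hv => /eqP e; apply/eqP/val_inj.
Qed.

Lemma ord_ne0 (v : 'I_n.+1) : (v != ord0) = ((v : nat) != 0).
Proof. by []. Qed.

Definition Pc (v : 'I_n.+1) : 'I_n.+1 := inord (parent s a v).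
Definition Hc (v : 'I_n.+1) : nat := hs s v.

Lemma Pc_val (v : 'I_n.+1) : v != ord0 -> (Pc v : nat) = parent s a v.
Proof. by move=> hv; rewrite /Pc inordK // ltnS parent_le // ord_mem. Qed.

Lemma aux_edge (u v : 'I_n.+1) :
  ((u != 0 :> nat) && (parent s a u == v)) = (u != ord0) && (Pc u == v).
Proof.
case: (eqVneq u ord0) => [->//|hu].
by rewrite -ord_ne0 hu /= -val_eqE /= Pc_val.
Qed.

Lemma HGc u v : (u, v) \in tau s a <->
  (u != ord0 /\ Pc u = v) \/ (v != ord0 /\ Pc v = u).
Proof.
rewrite inE /= !aux_edge.
split => [/orP[/andP[h1 /eqP h2]|/andP[h1 /eqP h2]]|[[h1 h2]|[h1 h2]]].
- by left.
- by right.
- by rewrite h1 h2 eqxx.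
- by rewrite h1 h2 eqxx orbT.
Qed.

Lemma Hc0 : Hc ord0 = 0. Proof. by []. Qed.

Lemma Hc_val (v : 'I_n.+1) : v != ord0 -> Hc v = level s v.
Proof. by rewrite ord_ne0 /Hc /hs => /negbTE ->. Qed.

Lemma Hcpos v : v != ord0 -> 0 < Hc v.
Proof. by move=> hv; rewrite Hc_val. Qed.

Lemma HcP v : v != ord0 -> Hc (Pc v) = (Hc v).-1.
Proof. by move=> hv; rewrite [Hc v]Hc_val // /Hc Pc_val // hs_parent // ord_mem. Qed.

Lemma Hcdir v : v != ord0 -> if odd (Hc v) then Pc v < v else v < Pc v.
Proof.
move=> hv; rewrite Hc_val // Pc_val //.
by case/andP: (parent_prop (ord_mem hv)).
Qed.

Lemma part1 : intransitive_tree (tau s a) /\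
  (forall (v : 'I_n.+1) (k : nat), is_depth (tau s a) v k <-> (v : nat) \in RunBlock s k).
Proof.
split; first split.
- exact: (tree_is_tree HGc Hc0 Hcpos HcP).
- exact: (tree_intransitive HGc Hcpos HcP Hcdir).
- move=> v k; rewrite (depthE HGc Hc0 Hcpos HcP) -hs_RB; last by rewrite -ltnS.
  by rewrite /Hc; split => [->|/eqP].
Qed.

Definition srt x := if odd (level s x) then sort leq (RunBlock s (level s x).-1)
  else sort geq (RunBlock s (level s x).-1).

Lemma parentE x : parent s a x = nth 0 (srt x) (deco a x).
Proof. by rewrite /parent /srt; case: odd. Qed.

Lemma srt_uniq x : uniq (srt x).
Proof. by rewrite /srt; case: odd; rewrite sort_uniq RB_uniq. Qed.

Lemma deco_lt_size x : x \in s -> deco a x < size (srt x).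
Proof.
move=> xs; have := deco_lt_mu xs; rewrite /mu /srt; cbv zeta.
case O: (odd (level s x)).
- rewrite /DescBlock odd_idx // size_sort => h; apply: leq_trans h _; exact: count_size.
- rewrite /AscBlock even_idx ?O // size_sort => h; apply: leq_trans h _; exact: count_size.
Qed.

End Canon.

Lemma injectivity n (s1 s2 : seq nat) (a1 a2 : n.-tuple nat) :
  canonical_decperm s1 a1 -> canonical_decperm s2 a2 ->
  tau s1 a1 = tau s2 a2 -> s1 = s2 /\ a1 = a2.
Proof.
move=> c1 c2 et.
have p1 : is_perm_of n s1 by case/andP: c1 => /andP[].
have p2 : is_perm_of n s2 by case/andP: c2 => /andP[].
have hH : forall v : 'I_n.+1, hs s1 v = hs s2 v.
  move=> v.
  have := (depthE (HGc p1 c1) (Hc0 n s1) (Hcpos s1) (HcP p1 c1) v (hs s1 v)).2 erefl.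
  rewrite et (depthE (HGc p2 c2) (Hc0 n s2) (Hcpos s2) (HcP p2 c2)).
  by rewrite /Hc => ->.
have hl : forall x, x \in s2 -> level s1 x = level s2 x.
  move=> x xs; have := hH (inord x).
  have xn : x < n.+1 by move: xs; rewrite (mem_s p2) ltnS => /andP[].
  have x0 : x != 0 by move: xs; rewrite (mem_s p2) lt0n => /andP[].
  by rewrite /hs inordK // (negbTE x0).
have es : s1 = s2.
  apply: (@irr_sorted_eq _ (ltf (level s1))).
  - exact: ltf_trans.
  - exact: ltf_irr.
  - by apply: sorted_ltf (s_uniq p1) _.
  - by apply: sorted_ltf (s_uniq p2) hl.
  - by move=> x; rewrite (mem_s p1) (mem_s p2).
subst s2; split => //.
have hpar : forall x, x \in s1 -> parent s1 a1 x = parent s1 a2 x.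
  move=> x xs.
  have xn : x < n.+1 by move: xs; rewrite (mem_s p1) ltnS => /andP[].
  have x0 : x != 0 by move: xs; rewrite (mem_s p1) lt0n => /andP[].
  set u : 'I_n.+1 := inord x.
  have u0 : u != ord0 by rewrite ord_ne0 inordK.
  have : (u, Pc s1 a1 u) \in tau s1 a2 by rewrite -et; apply/(HGc p1 c1); left.
  case/(HGc p1 c2) => [[_ e]|[w0 e]].
    by move: (congr1 val e) => /=; rewrite (Pc_val p1 c1 u0) (Pc_val p1 c2 u0) /u inordK.
  have h1 := HcP p1 c1 u0.
  have h2 := HcP p1 c2 w0.
  rewrite e /Hc in h2; rewrite /Hc in h1.
  have := Hcpos s1 u0; rewrite /Hc; lia.
have hdeco : forall x, x \in s1 -> deco a1 x = deco a2 x.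
  move=> x xs; have := hpar x xs; rewrite !parentE => /eqP.
  have d1 := deco_lt_size c1 xs; have d2 := deco_lt_size c2 xs.
  by rewrite nth_uniq ?(srt_uniq p1) // => /eqP.
apply: val_inj; apply: (@eq_from_nth _ 0); rewrite ?size_tuple // => i hi.
have := hdeco i.+1; rewrite /deco /= => -> //.
by rewrite (mem_s p1).
Qed.
Section Surj.
Variable n : nat.
Variable G : graph n.
Hypothesis hG : intransitive_tree G.

Lemma symG u v : adj G u v -> adj G v u.
Proof. by case: hG => [[h _ _ _] _]; apply: h. Qed.

Lemma irrG u : ~~ adj G u u.
Proof. by case: hG => [[_ h _ _] _]; apply: h. Qed.

Lemma conG u v : connect (adj G) u v.
Proof. by case: hG => [[_ _ h _] _]; apply: h. Qed.

Lemma acycG c : uniq c -> 3 <= size c -> ~~ cycle (adj G) c.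
Proof. by case: hG => [[_ _ _ h] _]; apply: h. Qed.

Lemma intrG v : (forall w, adj G v w -> v < w) \/ (forall w, adj G v w -> w < v).
Proof. by case: hG => _ h; apply: h. Qed.

Fixpoint reach (m : nat) (v : 'I_n.+1) : bool :=
  if m is m'.+1 then [exists u, reach m' u && adj G u v] else v == ord0.

Lemma reach_path p x m : path (adj G) x p -> reach m x -> reach (m + size p) (last x p).
Proof.
elim: p x m => [|y p IH] x m /=; first by rewrite addn0.
case/andP => axy pp rx; rewrite addnS -addSn; apply: IH => //=.
by apply/existsP; exists x; rewrite rx.
Qed.

Lemma reach_ex v : exists m, reach m v.
Proof.
case/connectP: (conG ord0 v) => p pp ->.
by exists (0 + size p); apply: reach_path.
Qed.

Definition d v := ex_minn (reach_ex v).

Lemma d_reach v : reach (d v) v.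
Proof. by rewrite /d; case: ex_minnP. Qed.

Lemma d_min v m : reach m v -> d v <= m.
Proof. by rewrite /d; case: ex_minnP => k _ h /h. Qed.

Lemma d0 : d ord0 = 0.
Proof. by apply/eqP; rewrite -leqn0; apply: d_min. Qed.

Lemma d_eq0 v : d v = 0 -> v = ord0.
Proof. by move=> h; have := d_reach v; rewrite h => /eqP. Qed.

Lemma d_edge u v : adj G u v -> d v <= (d u).+1.
Proof.
move=> a; apply: d_min => /=; apply/existsP; exists u.
by rewrite d_reach.
Qed.

Lemma d_par v m : d v = m.+1 -> exists u, adj G u v /\ d u = m.
Proof.
move=> h; have := d_reach v; rewrite h /= => /existsP[u /andP[ru a]].
exists u; split => //; apply/eqP; rewrite eqn_leq d_min //=.
by have := d_edge a; rewrite h ltnS.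
Qed.

Definition typ (v : 'I_n.+1) : bool := [forall w, adj G v w ==> (v < w)].

Lemma typT v : typ v -> forall w, adj G v w -> v < w.
Proof. by move/forallP => h w a; have := h w; rewrite a. Qed.

Lemma typF v : ~~ typ v -> forall w, adj G v w -> w < v.
Proof.
move=> t; case: (intrG v) => // h.
by case/negP: t; apply/forallP => w; apply/implyP; apply: h.
Qed.

Lemma typI v : (forall w, adj G v w -> v < w) -> typ v.
Proof. by move=> h; apply/forallP => w; apply/implyP; apply: h. Qed.

Lemma typ_edge u v : adj G u v -> typ v = ~~ typ u.
Proof.
move=> a; have a' := symG a.
case tu: (typ u).
  have := typT tu a => lt; apply/negP => tv; have := typT tv a'; lia.
case tv: (typ v) => //.
have := typF (negbT tu) a; have := typF (negbT tv) a'; lia.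
Qed.

Lemma typ0 : typ ord0.
Proof.
apply: typI => w a; rewrite lt0n; apply: contra (irrG ord0) => /eqP e.
have ew : w = ord0 by apply: val_inj.
by rewrite ew in a.
Qed.

Lemma typ_reach m v : reach m v -> typ v = ~~ odd m.
Proof.
elim: m v => [v /eqP -> |m IH v /= /existsP[u /andP[ru a]]]; first by rewrite typ0.
by rewrite (typ_edge a) (IH _ ru) negbK.
Qed.

Lemma typ_d v : typ v = ~~ odd (d v).
Proof. exact: typ_reach (d_reach v). Qed.

Lemma d_edge2 u v : adj G u v -> d v = (d u).+1 \/ d u = (d v).+1.
Proof.
move=> a; have h1 := d_edge a; have h2 := d_edge (symG a).
have : d u != d v.
  apply/negP => /eqP e; have := typ_edge a; rewrite !typ_d e.
  by case: odd.
lia.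
Qed.

Lemma chain m x y : x != y -> d x = m -> d y = m ->
  exists q, [/\ path (adj G) x q, last x q = y, uniq (x :: q) &
              forall z, z \in q -> d z <= m].
Proof.
elim: m x y => [|m IH] x y ne dx dy.
  by move: ne; rewrite (d_eq0 dx) (d_eq0 dy) eqxx.
have [px [apx dpx]] := d_par dx.
have [py [apy dpy]] := d_par dy.
case: (eqVneq px py) => [e|ne'].
  exists [:: px; y]; split => //=.
  - by rewrite symG //= e apy.
  - rewrite !inE negb_or ne andbT (eq_sym px y) andbT.
    apply/andP; split; apply/negP => /eqP e'.
      by move: dpx; rewrite -e' dx; lia.
    by move: dy; rewrite e' dpx; lia.
  - by move=> z; rewrite !inE => /orP[/eqP ->|/eqP ->]; [rewrite dpx|rewrite dy].
have [q [pq lq uq hq]] := IH px py ne' dpx dpy.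
exists (px :: rcons q y); split.
- by rewrite /= symG //= rcons_path pq lq apy.
- by rewrite /= last_rcons.
- have hx : x \notin px :: rcons q y.
    rewrite inE mem_rcons inE negb_or; apply/andP; split.
      by apply/negP => /eqP e; move: dpx dx; rewrite e; lia.
    rewrite negb_or ne /=; apply/negP => /hq; rewrite dx; lia.
  rewrite /= hx /=.
  move: uq => /= /andP[pxq uq].
  rewrite mem_rcons inE negb_or rcons_uniq uq andbT.
  have hy : y \notin q by apply/negP => /hq; rewrite dy; lia.
  rewrite hy andbT; apply/andP; split.
    by apply/negP => /eqP e; move: dpx dy; rewrite e; lia.
  exact: pxq.
- move=> z; rewrite inE mem_rcons inE => /orP[/eqP ->|/orP[/eqP ->|/hq]].
  + by rewrite dpx.
  + by rewrite dy.
  + by move=> h; apply: leqW.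
Qed.

Lemma par_uniq v u1 u2 : adj G u1 v -> adj G u2 v ->
  d u1 = (d v).-1 -> d u2 = (d v).-1 -> u1 = u2.
Proof.
move=> a1 a2 d1 d2; apply/eqP; apply: contraT => ne.
case E: (d v) => [|m].
  by move: ne; rewrite E in d1 d2; rewrite (d_eq0 d1) (d_eq0 d2) eqxx.
rewrite E /= in d1 d2.
have [q [pq lq uq hq]] := chain ne d1 d2.
have := acycG (c := v :: u1 :: q).
have hv : v \notin u1 :: q.
  rewrite inE negb_or; apply/andP; split.
    by apply/negP => /eqP e; move: d1; rewrite -e E; lia.
  by apply/negP => /hq; rewrite E; lia.
have hu : uniq (v :: u1 :: q) by rewrite cons_uniq hv uq.
move=> /(_ hu).
case: q pq lq {uq hq hv hu} => [/= _ e|z q pq lq]; first by move: ne; rewrite e eqxx.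
move=> /(_ isT) /negP h; exfalso; apply: h.
have hp : path (adj G) u1 (rcons (z :: q) v) by rewrite rcons_path pq lq a2.
by apply/andP; split; [exact: symG | exact: hp].
Qed.

Definition par v : 'I_n.+1 := odflt ord0 [pick u | adj G u v && (d u == (d v).-1)].

Lemma par_spec v : v != ord0 -> adj G (par v) v /\ d (par v) = (d v).-1.
Proof.
move=> hv; rewrite /par; case: pickP => [u /andP[a /eqP e]|none] //=.
case E: (d v) => [|m]; first by move: hv; rewrite (d_eq0 E) eqxx.
have [u [a e]] := d_par E.
by move: (none u); rewrite a e E /= eqxx.
Qed.

Lemma dpos v : v != ord0 -> 0 < d v.
Proof. by move=> hv; rewrite lt0n; apply: contra hv => /eqP /d_eq0 ->. Qed.

Lemma G_char u v : (u, v) \in G <-> (u != ord0 /\ par u = v) \/ (v != ord0 /\ par v = u).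
Proof.
split.
- move=> a; have a' : adj G u v by [].
  case: (d_edge2 a') => e.
  + have hv : v != ord0 by apply/eqP => e'; move: e; rewrite e' d0.
    right; split => //.
    have [pa pd] := par_spec hv.
    by apply: par_uniq pa a' pd _; rewrite e.
  + have hu : u != ord0 by apply/eqP => e'; move: e; rewrite e' d0.
    left; split => //.
    have [pa pd] := par_spec hu.
    by apply: par_uniq pa (symG a') pd _; rewrite e.
- case=> [[hu <-]|[hv <-]].
  + exact: symG (par_spec hu).1.
  + exact: (par_spec hv).1.
Qed.

Lemma par_dir v : v != ord0 -> if odd (d v) then par v < v else v < par v.
Proof.
move=> hv; have a := symG (par_spec hv).1.
case O: (odd (d v)).
  by apply: typF a; rewrite typ_d O.
by apply: typT a; rewrite typ_d O.
Qed.

End Surj.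
Lemma count_flatten_last (f : nat -> seq nat) (P : pred nat) m l : 0 < l ->
  count P (f (m + l.-1)) <= count P (flatten [seq f k | k <- iota m l]).
Proof.
case: l => // l _; rewrite -[l.+1.-1]/l.
rewrite -[l.+1]addn1 iotaD map_cat flatten_cat count_cat /= cats0.
exact: leq_addl.
Qed.

Lemma mu_le_sb s x : mu s x <= stable_bound s x.
Proof.
rewrite /mu /stable_bound; cbv zeta.
have hl := level_gt0 s x.
move: (level s x) hl => k hl.
case O: (odd k).
- rewrite /DescBlock.
  have := @count_flatten_last (fun k => RunBlock s (2 * k)) (fun j => j < x) 0 k.+1./2.
  rewrite add0n; apply.
  move: (odd_double_half k.+1); rewrite /= O /=; lia.
- rewrite /AscBlock.
  have := @count_flatten_last (fun k => RunBlock s (2 * k).-1) (fun j => x < j) 1 k./2.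
  have h2 : 0 < k./2.
    move: (odd_double_half k); rewrite O /=; lia.
  rewrite add1n prednK //; apply; done.
Qed.

Section Build.
Variable n : nat.
Hypothesis hn : 0 < n.
Variable G : graph n.
Hypothesis tG : intransitive_tree G.

Definition hx (x : nat) : nat := d tG (inord x).
Definition leG x y := (x == y) || ltf hx x y.
Definition sG := sort leG (iota 1 n).

Lemma leG_total : total leG.
Proof.
move=> x y; rewrite /leG /ltf; case: (eqVneq x y) => [->|ne]; first by rewrite eqxx.
rewrite /=.
case: (ltngtP (hx x) (hx y)) => //= e; rewrite e.
by case: odd; move: ne; rewrite neq_ltn => /orP[->|->]; rewrite ?orbT.
Qed.

Lemma perm_sG : is_perm_of n sG.
Proof. by rewrite /is_perm_of /sG perm_sort perm_refl. Qed.

Lemma sG_uniq : uniq sG. Proof. exact: s_uniq perm_sG. Qed.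
Lemma mem_sG x : (x \in sG) = (0 < x <= n). Proof. exact: mem_s perm_sG x. Qed.
Lemma size_sG : size sG = n. Proof. exact: size_s perm_sG. Qed.

Lemma path_strict s x : uniq (x :: s) -> path leG x s -> path (ltf hx) x s.
Proof.
elim: s x => [//|y s IH] x /= /andP[nx u] /andP[l p]; apply/andP; split.
  move: l; rewrite /leG; case: eqP => [e|_ //].
  by move: nx; rewrite e inE eqxx.
by apply: IH.
Qed.

Lemma sG_sorted : sorted (ltf hx) sG.
Proof.
have := sort_sorted leG_total (iota 1 n); have := sG_uniq; rewrite -/sG.
by case: sG => //= x s u p; apply: path_strict.
Qed.

Lemma inord_sG x : x \in sG -> (inord x : 'I_n.+1) != ord0 /\ nat_of_ord (inord x : 'I_n.+1) = x.
Proof.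
rewrite mem_sG => /andP[x0 xn].
have e : nat_of_ord (inord x : 'I_n.+1) = x by rewrite inordK.
by split => //; rewrite ord_ne0 e -lt0n.
Qed.

Lemma hx_pos x : x \in sG -> 0 < hx x.
Proof. by move=> /inord_sG [h _]; apply: dpos. Qed.

Definition px (x : nat) : nat := par tG (inord x).

Lemma hx0 : hx 0 = 0.
Proof.
rewrite /hx; have -> : (inord 0 : 'I_n.+1) = ord0 by apply: val_inj; rewrite /= inordK.
exact: d0.
Qed.

Lemma px_prop x : x \in sG ->
  [/\ hx (px x) = (hx x).-1, px x <= n & (if odd (hx x) then px x < x else x < px x)].
Proof.
move=> xs; have [h0 hv] := inord_sG xs.
split.
- by rewrite /hx /px inord_val (par_spec tG h0).2.
- by rewrite /px -ltnS ltn_ord.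
- by have := par_dir tG h0; rewrite hv.
Qed.

Lemma px0 x : x \in sG -> hx (px x) = 0 -> px x = 0.
Proof.
by move=> xs; rewrite /hx /px inord_val => /d_eq0 ->.
Qed.

Lemma px_mem x : x \in sG -> 1 < hx x -> px x \in sG.
Proof.
move=> xs h; have [h1 h2 _] := px_prop xs.
rewrite mem_sG h2 andbT lt0n; apply/eqP => e.
by move: h1; rewrite e hx0; lia.
Qed.

Lemma nth_sG_mem i : i < n -> nth 0 sG i \in sG.
Proof. by move=> hi; rewrite mem_nth // size_sG. Qed.

Lemma pos_lt i j : j < i -> i < n -> ltf hx (nth 0 sG j) (nth 0 sG i).
Proof.
move=> ji hi.
have := @sorted_ltn_nth _ _ (@ltf_trans hx) 0 sG sG_sorted j i.
rewrite !inE size_sG; apply => //; exact: ltn_trans ji hi.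
Qed.

Lemma pos_le i j : j <= i -> i < n -> hx (nth 0 sG j) <= hx (nth 0 sG i).
Proof.
rewrite leq_eqVlt => /orP[/eqP -> //|ji] hi.
exact: ltf_le (pos_lt ji hi).
Qed.

Lemma exists_h1 : exists2 w, w \in sG & hx w = 1.
Proof.
have gen : forall m (v : 'I_n.+1), d tG v = m.+1 -> exists w, d tG w = 1.
  elim=> [v h|m IH v h]; first by exists v.
  by have [u [_ e]] := d_par h; apply: IH e.
have v0 : (inord 1 : 'I_n.+1) != ord0 by rewrite ord_ne0 inordK.
have [w hw] := gen _ _ (esym (prednK (dpos tG v0))).
have w0 : w != ord0 by apply/eqP => e; move: hw; rewrite e d0.
exists (w : nat); last by rewrite /hx inord_val.
by have := ltn_ord w; rewrite ltnS mem_sG => ->; rewrite andbT lt0n -ord_ne0.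
Qed.

Lemma blk_sG i : i < n -> blk sG i = hx (nth 0 sG i).
Proof.
elim: i => [hi|i IH hi].
  have [w ws hw] := exists_h1.
  have jn : index w sG < n by rewrite -size_sG index_mem.
  have := pos_le (leq0n (index w sG)) jn; rewrite nth_index // hw.
  have := hx_pos (nth_sG_mem hi); rewrite /blk /=; lia.
have hi' : i < n by apply: ltnW.
have ih := IH hi'.
set x := nth 0 sG i; set y := nth 0 sG i.+1.
have lxy : ltf hx x y by move/(sortedP 0): sG_sorted => /(_ i); rewrite size_sG; apply.
have ea : asc_top sG i.+1 = (x < y) by [].
rewrite blkS (asc_blk sG i) ih ea -/x.
move: lxy; rewrite /ltf => /orP[lt|/andP[/eqP eq dir]]; last first.
  rewrite -eq; case O: (odd (hx x)) dir => dir.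
    by rewrite dir addn0.
  by rewrite ltnNge (ltnW dir) addn0.
have xs : x \in sG := nth_sG_mem hi'.
have ys : y \in sG := nth_sG_mem hi.
have hy2 : 1 < hx y by have := hx_pos xs; lia.
have [h1 h2 h3] := px_prop ys.
have pm := px_mem ys hy2.
set p := px y in h1 h2 h3 pm.
set j := index p sG.
have jn : j < n by rewrite -size_sG index_mem.
have ej : nth 0 sG j = p by rewrite nth_index.
have jle : j <= i.
  rewrite leqNgt; apply/negP => ij.
  case: (ltngtP j i.+1) => h; first by lia.
  - by have := pos_le (ltnW h) jn; rewrite ej -/y; lia.
  - by move: h1; rewrite -ej h -/y; lia.
have hp_le : hx p <= hx x by rewrite -ej; apply: pos_le.
have ey : hx y = (hx x).+1 by lia.
have pcmp : if odd (hx x) then p <= x else x <= p.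
  move: jle; rewrite leq_eqVlt => /orP[/eqP ej'|ji].
    by rewrite -ej ej'; case: odd.
  have := pos_lt ji hi'; rewrite ej /ltf => /orP[h|/andP[/eqP e]]; first (rewrite -/x in h; lia).
  by rewrite e; case: odd => /ltnW.
rewrite ey /= in h3; rewrite ey.
case O: (odd (hx x)) pcmp h3 => /= pcmp h3.
  by rewrite ltnNge (ltnW (leq_trans h3 pcmp)) addn1.
by rewrite (leq_ltn_trans pcmp h3) addn1.
Qed.

Lemma level_sG x : x \in sG -> level sG x = hx x.
Proof.
move=> xs; have jn : index x sG < n by rewrite -size_sG index_mem.
by rewrite /level blk_sG // nth_index.
Qed.

Definition srtG x := if odd (hx x) then sort leq (RunBlock sG (hx x).-1)
  else sort geq (RunBlock sG (hx x).-1).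

Definition aseq := mkseq (fun i => index (px i.+1) (srtG i.+1)) n.
Definition aG : n.-tuple nat := @Tuple n nat aseq (introT eqP (size_mkseq _ n)).

Lemma deco_aG x : x \in sG -> deco aG x = index (px x) (srtG x).
Proof.
rewrite mem_sG => /andP[x0 xn].
by rewrite /deco /= /aseq nth_mkseq ?prednK // -ltnS prednK.
Qed.

Lemma px_RB x : x \in sG -> px x \in RunBlock sG (hx x).-1.
Proof.
move=> xs; have [h1 h2 h3] := px_prop xs.
rewrite (mem_RB perm_sG); case: eqP => [e|ne].
  by rewrite px0 // h1 e.
have h : 1 < hx x by have := hx_pos xs; lia.
by rewrite px_mem // level_sG ?px_mem // h1 eqxx.
Qed.

Lemma parent_aG x : x \in sG -> parent sG aG x = px x.
Proof.
move=> xs; rewrite /parent; cbv zeta; rewrite level_sG // deco_aG // /srtG.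
by case: odd; rewrite nth_index // mem_sort px_RB.
Qed.

Lemma canon : canonical_decperm sG aG.
Proof.
have hmu : forall x, x \in sG -> deco aG x < mu sG x.
  move=> x xs; rewrite deco_aG // /mu; cbv zeta; rewrite level_sG // /srtG.
  have [h1 h2 h3] := px_prop xs; have hr := px_RB xs.
  case O: (odd (hx x)); rewrite O in h3.
  - rewrite /DescBlock odd_idx // -(count_sort leq).
    apply: (index_sorted_count leq_trans (sort_sorted leq_total _)).
    + by move=> y /= yle; exact: leq_ltn_trans yle h3.
    + by [].
    + by rewrite mem_sort.
  - rewrite /AscBlock even_idx ?O // -(count_sort geq).
    apply: (index_sorted_count geq_trans (sort_sorted geq_tot _)).
    + by move=> y /= yge; exact: leq_trans h3 yge.
    + by [].
    + by rewrite mem_sort.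
rewrite /canonical_decperm /stable_decperm perm_sG /=.
apply/andP; split; apply/allP => x xs.
  exact: leq_trans (hmu x xs) (mu_le_sb _ _).
exact: hmu.
Qed.

Lemma tau_aG : tau sG aG = G.
Proof.
have e : forall u v : 'I_n.+1,
    ((u != 0 :> nat) && (parent sG aG u == v)) = (u != ord0) && (par tG u == v).
  move=> u v; case: (eqVneq u ord0) => [->//|hu].
  have um : (u : nat) \in sG by apply: (ord_mem perm_sG).
  by rewrite -ord_ne0 hu /= parent_aG // /px inord_val -val_eqE.
apply/setP => -[u v]; rewrite inE /= !e.
apply/idP/idP.
  by case/orP => /andP[h1 /eqP h2]; apply/(G_char tG); [left|right].
by move/(G_char tG) => [[h1 h2]|[h1 h2]]; apply/orP; [left|right]; rewrite h1 h2 eqxx.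
Qed.

End Build.

Theorem mainTheorem13 (n : nat) (hn : 1 <= n) :
  (forall (s : seq nat) (a : n.-tuple nat), canonical_decperm s a ->
     intransitive_tree (tau s a) /\
     (forall (v : 'I_n.+1) (k : nat), is_depth (tau s a) v k <-> (v : nat) \in RunBlock s k))
  /\
  (forall (s1 s2 : seq nat) (a1 a2 : n.-tuple nat),
     canonical_decperm s1 a1 -> canonical_decperm s2 a2 ->
     tau s1 a1 = tau s2 a2 -> s1 = s2 /\ a1 = a2)
  /\
  (forall G : graph n, intransitive_tree G ->
     exists (s : seq nat) (a : n.-tuple nat), canonical_decperm s a /\ tau s a = G).
Proof.
split; [|split].
- move=> s a c; have p : is_perm_of n s by case/andP: c => /andP[].
  exact: (part1 p c).
- exact: injectivity.
- move=> G tG; exists (sG tG), (aG tG); split.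
  + exact: (canon hn tG).
  + exact: (tau_aG hn tG).
Qed.
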